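(* Let $n\ge3$ and let $A(z_1,\dots,z_n)=\sum_{i=1}^n[z_i,z_{i+1}]$ on the space of plane $n$-gons. Every level hypersurface $\{A=a\}$ with $a\neq0$ is smooth, and the dual Birkhoff distribution $\mathcal F$ is tangent to these hypersurfaces.
   Context: $[\cdot,\cdot]$ is the determinant of two plane vectors; indices are cyclic. The function $A$ is twice the (signed) area of the polygon. $G_n$ is the set of $n$-gons $(z_1,\dots,z_n)\in(\mathbb R^2)^n$ with $z_i\ne z_{i+1}$ for all $i$. The dual Birkhoff distribution $\mathcal F$ on $G_n$: a tangent vector $W=(w_1,\dots,w_n)$ (velocities of the vertices) lies in $\mathcal F$ iff for each $i$ the induced motion of the line $z_iz_{i+1}$ is an infinitesimal rotation about the midpoint of $z_iz_{i+1}$; equivalently $[w_i+w_{i+1},z_{i+1}-z_i]=0$ for all $i$. *)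

(* Defs.v *)
From HB Require Import structures.
From mathcomp Require Import all_boot all_order all_algebra.
From mathcomp Require Import all_classical all_reals all_analysis.
Set Implicit Arguments. Unset Strict Implicit. Unset Printing Implicit Defensive.
Import Order.TTheory GRing.Theory Num.Theory.
Import numFieldNormedType.Exports.
Local Open Scope ring_scope.

(* A plane n-gon (z_1,...,z_n) is an n x 2 real matrix whose i-th row is z_i.
   Indices are cyclic: the successor of i : 'I_n is ordS i (= (i+1) mod n). *)

Definition det2 (R : ringType) (u v : 'rV[R]_2) : R :=
  u ord0 ord0 * v ord0 ord_max - u ord0 ord_max * v ord0 ord0.

Definition vert (R : ringType) (n : nat) (z : 'M[R]_(n, 2)) (i : 'I_n) : 'rV[R]_2 :=
  row i z.

Definition Area (R : ringType) (n : nat) (z : 'M[R]_(n, 2)) : R :=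
  \sum_(i < n) det2 (vert z i) (vert z (ordS i)).

Definition in_Gn (R : ringType) (n : nat) (z : 'M[R]_(n, 2)) : Prop :=
  forall i : 'I_n, vert z i != vert z (ordS i).

Definition in_dualBirkhoff (R : ringType) (n : nat) (z W : 'M[R]_(n, 2)) : Prop :=
  forall i : 'I_n,
    det2 (vert W i + vert W (ordS i)) (vert z (ordS i) - vert z i) = 0.

(* Main.v *)
Require Import Defs.
From HB Require Import structures.
From mathcomp Require Import all_boot all_order all_algebra.
From mathcomp Require Import all_classical all_reals all_analysis.
From mathcomp Require Import ring.
Import Order.TTheory GRing.Theory Num.Theory.
Import numFieldNormedType.Exports.
Local Open Scope ring_scope.

Section H.
Variable R : realType.

Lemma is_diff_coord m n (M : 'M[R]_(m, n)) i j :
  is_diff M (fun N : 'M[R]_(m, n) => N i j) (fun N : 'M[R]_(m, n) => N i j).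
Proof.
have @f : {linear 'M[R]_(m, n) -> R}.
  by exists (fun N : 'M[R]_(_, _) => N i j); do 2![eexists]; do ?[constructor];
     rewrite ?mxE// => ? *; rewrite ?mxE//; move=> ?; rewrite !mxE.
rewrite (_ : (fun _ => _) = f) //.
apply: DiffDef; first exact/linear_differentiable/coord_continuous.
by rewrite diff_lin //; apply: coord_continuous.
Qed.

Lemma is_diff_sumR (V : normedModType R) k (f df : 'I_k -> V -> R) x :
  (forall i, is_diff x (f i) (df i)) ->
  is_diff x (fun y => \sum_i f i y) (fun y => \sum_i df i y).
Proof.
move=> H.
have -> : (fun y => \sum_i f i y) = \sum_i f i.
  by apply/funext => y; rewrite fct_sumE.
have -> : (fun y => \sum_i df i y) = \sum_i df i.
  by apply/funext => y; rewrite fct_sumE.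
elim/big_rec2: _ => [|i y1 y2 _ IH].
  exact: is_diff_cst.
exact: is_diffD.
Qed.

End H.

Theorem lemma2p3 (R : realType) (n : nat) (hn : (3 <= n)%N) (a : R) (ha : a != 0) :
  forall z : 'M[R]_(n, 2), in_Gn z -> Area z = a ->
    [/\ differentiable (@Area R n) z,
        (exists W : 'M[R]_(n, 2), 'd (@Area R n) z W != 0)
      & (forall W : 'M[R]_(n, 2), in_dualBirkhoff z W -> 'd (@Area R n) z W = 0)].
Proof.
move=> z _ hA.
set D := fun W : 'M[R]_(n, 2) => \sum_(i < n)
  (W i ord0 * z (ordS i) ord_max + z i ord0 * W (ordS i) ord_max
   - W i ord_max * z (ordS i) ord0 - z i ord_max * W (ordS i) ord0).
have AE : @Area R n = fun N => \sum_(i < n)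
   (N i ord0 * N (ordS i) ord_max - N i ord_max * N (ordS i) ord0).
  by apply/funext => N; rewrite /Area; apply: eq_bigr => i _; rewrite /det2 /vert !mxE.
have HD : is_diff z (@Area R n) D.
  rewrite AE /D; apply: is_diff_sumR => i.
  apply: is_diff_eq.
    apply: is_diffB; apply: is_diffM; apply: is_diff_coord.
  apply/funext => W /=; rewrite !fctE /= /GRing.scale /=; ring.
have dE : 'd (@Area R n) z = D :> (_ -> _) by rewrite diff_val.
split.
- exact: ex_diff.
- exists z; rewrite dE /D.
  have -> : \sum_(i < n) (z i ord0 * z (ordS i) ord_max + z i ord0 * z (ordS i) ord_max
   - z i ord_max * z (ordS i) ord0 - z i ord_max * z (ordS i) ord0) = 2 * Area z.
    rewrite AE big_distrr /=; apply: eq_bigr => i _; ring.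
  by rewrite hA mulf_neq0 // pnatr_eq0.
- move=> W HW; rewrite dE /D.
  set g := fun i : 'I_n => W i ord0 * z i ord_max - W i ord_max * z i ord0.
  have H0 : \sum_(i < n) det2 (vert W i + vert W (ordS i)) (vert z (ordS i) - vert z i) = 0.
    by rewrite big1 // => i _; apply: HW.
  have Hg : \sum_(i < n) g (ordS i) = \sum_(i < n) g i.
    by rewrite [RHS](reindex_inj (@ordS_inj n)).
  have HE : \sum_(i < n) det2 (vert W i + vert W (ordS i)) (vert z (ordS i) - vert z i)
    = \sum_(i < n) (W i ord0 * z (ordS i) ord_max + z i ord0 * W (ordS i) ord_max
   - W i ord_max * z (ordS i) ord0 - z i ord_max * W (ordS i) ord0)
     + (\sum_(i < n) g (ordS i) - \sum_(i < n) g i).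
    rewrite -sumrB -big_split /=; apply: eq_bigr => i _.
    by rewrite /det2 /vert /g !mxE; ring.
  rewrite HE in H0; rewrite Hg subrr addr0 in H0; exact: H0.
Qed.
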